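(* Let $m\ge 2$ be an integer, let $B\subseteq m\mathbb Z$ be a finite nonempty set, and let $F\subseteq\mathbb Z$ be a finite nonempty set all of whose elements are congruent to $\tilde f$ modulo $m$, where $\tilde f\in\{1,\dots,m-1\}$. If \[m\ge \tilde f+2\tilde f\left\lfloor\frac{|B|+1}{\tilde f}\right\rfloor+\operatorname{mod}_{\tilde f}(|B|+1),\] then $C=m\mathbb N\cup B\cup F$ arises as a minimal additive complement in $\mathbb Z$.
   Context: $\mathbb N=\{0,1,2,\dots\}$, $m\mathbb N=\{mk:k\in\mathbb N\}$; $\operatorname{mod}_{a}n$ denotes the remainder of $n$ upon division by $a$. For $C,W\subseteq\mathbb Z$, $C+W=\{c+w:c\in C,w\in W\}$. $C$ is a minimal additive complement (MAC) to $W$ if $C+W=\mathbb Z$ and no proper subset $C'\subsetneq C$ satisfies $C'+W=\mathbb Z$. $C$ arises as a MAC if there exists $W\subseteq\mathbb Z$ to which $C$ is a MAC. *)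

(* Defs.v *)
From Stdlib Require Import ZArith List.
Open Scope Z_scope.

Definition sumset (C W : Z -> Prop) (z : Z) : Prop :=
  exists c w, C c /\ W w /\ z = c + w.

Definition covers (C W : Z -> Prop) : Prop := forall z : Z, sumset C W z.

Definition is_MAC (C W : Z -> Prop) : Prop :=
  covers C W /\
  forall C' : Z -> Prop,
    (forall x, C' x -> C x) ->
    (exists x, C x /\ ~ C' x) ->
    ~ covers C' W.

Definition arises_as_MAC (C : Z -> Prop) : Prop :=
  exists W : Z -> Prop, is_MAC C W.

(* Main.v *)
Require Import Defs.
From Stdlib Require Import ZArith List Lia Classical.
Open Scope Z_scope.

Definition pos (ft e : Z) := 2*ft*(e/ft) + e mod ft.

Lemma pos_decomp ft e : 1 <= ft -> 0 <= e ->
  exists a c, e = ft*a + c /\ 0 <= c < ft /\ 0 <= a /\ pos ft e = 2*ft*a + c.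
Proof.
  intros H1 H2. exists (e/ft), (e mod ft).
  pose proof (Z.div_mod e ft ltac:(lia)). pose proof (Z.mod_pos_bound e ft ltac:(lia)).
  pose proof (Z.div_pos e ft ltac:(lia) ltac:(lia)). unfold pos. lia.
Qed.

Lemma pos_bounds m ft n e : 1 <= ft -> 0 <= n ->
  ft + 2 * ft * ((n + 1) / ft) + (n + 1) mod ft <= m ->
  0 <= e <= n -> 0 <= pos ft e /\ pos ft e + ft < m.
Proof.
  intros H1 Hn Hb He.
  destruct (pos_decomp ft e H1 ltac:(lia)) as (a & c & Ee & Hc & Ha & Ep).
  rewrite Ep.
  pose proof (Z.div_mod (n+1) ft ltac:(lia)). pose proof (Z.mod_pos_bound (n+1) ft ltac:(lia)).
  set (Q := (n+1)/ft) in *. set (S := (n+1) mod ft) in *.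
  split. nia.
  destruct (Z_le_gt_dec a (Q-1)) as [HaQ|HaQ].
  - assert (ft*a <= ft*(Q-1)) by (apply Z.mul_le_mono_nonneg_l; lia). nia.
  - assert (ft*a < ft*(Q+1)) by nia.
    assert (a < Q+1) by (apply (Z.mul_lt_mono_pos_l ft); lia).
    assert (a = Q) by lia. subst a. nia.
Qed.

Lemma pos_inj ft e e' : 1 <= ft -> 0 <= e -> 0 <= e' -> pos ft e = pos ft e' -> e = e'.
Proof.
  intros H1 H2 H3 E.
  destruct (pos_decomp ft e H1 H2) as (a & c & Ee & Hc & Ha & Ep).
  destruct (pos_decomp ft e' H1 H3) as (a' & c' & Ee' & Hc' & Ha' & Ep').
  rewrite Ep, Ep' in E.
  destruct (Z.lt_trichotomy a a') as [L|[L|L]].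
  - assert (ft*(a+1) <= ft*a') by (apply Z.mul_le_mono_nonneg_l; lia). nia.
  - subst. nia.
  - assert (ft*(a'+1) <= ft*a) by (apply Z.mul_le_mono_nonneg_l; lia). nia.
Qed.

Lemma pos_neq ft e e' : 1 <= ft -> 0 <= e -> 0 <= e' -> pos ft e <> pos ft e' + ft.
Proof.
  intros H1 H2 H3 E.
  destruct (pos_decomp ft e H1 H2) as (a & c & Ee & Hc & Ha & Ep).
  destruct (pos_decomp ft e' H1 H3) as (a' & c' & Ee' & Hc' & Ha' & Ep').
  rewrite Ep, Ep' in E.
  destruct (Z.lt_trichotomy a a') as [L|[L|L]].
  - assert (ft*(a+1) <= ft*a') by (apply Z.mul_le_mono_nonneg_l; lia). nia.
  - subst. nia.
  - assert (ft*(a'+1) <= ft*a) by (apply Z.mul_le_mono_nonneg_l; lia). nia.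
Qed.

Lemma mod_sub m z c r s : 0 < m -> z mod m = r -> c mod m = s -> 0 <= r - s < m -> (z - c) mod m = r - s.
Proof. intros Hm H1 H2 H3. rewrite Zminus_mod, H1, H2. apply Z.mod_small; lia. Qed.

Lemma mod_add m z c r s : 0 < m -> z mod m = r -> c mod m = s -> 0 <= r + s < m -> (z + c) mod m = r + s.
Proof. intros Hm H1 H2 H3. rewrite Z.add_mod, H1, H2 by lia. apply Z.mod_small; lia. Qed.

Lemma mod_mul_sub m a k : (a - m*k) mod m = a mod m.
Proof. replace (a - m*k) with (a + (-k)*m) by ring. apply Z_mod_plus_full. Qed.

Lemma list_max (l : list Z) : l <> nil -> exists x, In x l /\ forall y, In y l -> y <= x.
Proof.
  induction l as [|a l IH]; intros H; [congruence|].
  destruct l as [|b l'].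
  - exists a. simpl. split; [auto|]. intros y [->|[]]; lia.
  - destruct IH as (x & Hx & Hm); [discriminate|].
    destruct (Z_le_gt_dec a x).
    + exists x. split; [right; auto|]. intros y [->|Hy]; [lia|auto].
    + exists a. split; [left; auto|]. intros y [->|Hy]; [lia|]. specialize (Hm y Hy); lia.
Qed.

Lemma list_min (l : list Z) : l <> nil -> exists x, In x l /\ forall y, In y l -> x <= y.
Proof.
  induction l as [|a l IH]; intros H; [congruence|].
  destruct l as [|b l'].
  - exists a. simpl. split; [auto|]. intros y [->|[]]; lia.
  - destruct IH as (x & Hx & Hm); [discriminate|].
    destruct (Z_le_gt_dec x a).
    + exists x. split; [right; auto|]. intros y [->|Hy]; [lia|auto].
    + exists a. split; [left; auto|]. intros y [->|Hy]; [lia|]. specialize (Hm y Hy); lia.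
Qed.

Definition SB (B : list Z) := fold_right (fun b s => Z.abs b + s) 0 B.

Lemma SB_ge (B : list Z) b : In b B -> Z.abs b <= SB B.
Proof.
  induction B as [|a l IH]; simpl; [tauto|].
  assert (0 <= SB l) by (clear; induction l; simpl; lia).
  intros [->|Hb]; [lia|]. specialize (IH Hb). lia.
Qed.

Section Main.
Variables (m ft : Z) (B F : list Z) (fmin fmax : Z).
Hypothesis Hm : 2 <= m.
Hypothesis Hft : 1 <= ft <= m - 1.
Hypothesis HBd : forall b, In b B -> (m | b).
Hypothesis HBne : B <> nil.
Hypothesis HFm : forall f, In f F -> f mod m = ft.
Hypothesis Hfmin : In fmin F.
Hypothesis Hfmin' : forall f, In f F -> fmin <= f.
Hypothesis Hfmax : In fmax F.
Hypothesis Hfmax' : forall f, In f F -> f <= fmax.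
Hypothesis Hbound : ft + 2 * ft * ((Z.of_nat (length B) + 1) / ft)
     + (Z.of_nat (length B) + 1) mod ft <= m.

Local Notation n := (Z.of_nat (length B)).

Definition G := m * (2*(fmax - fmin) + 2*SB B + 1).
Definition bb e := nth (Z.to_nat (e-1)) B 0.
Definition T r g := r + ft - G*(g - fmin + 1).
Definition Hole r w := exists g, In g F /\ T r g - fmax <= w <= T r g - fmin /\ w <> T r g - g.
Definition FC r w := (forall f, In f F -> w + f <> r + ft) /\ ~ Hole r w.
Definition FirstC e w := if Z.eq_dec e 0 then (forall f, In f F -> w + f < ft) else FC (pos ft e) w.
Definition SecondC e w := if Z.eq_dec e 0 then w = ft else w = pos ft e + ft - bb e.
Definition Wset w :=
  (exists e, 0 <= e <= n /\ w mod m = pos ft e /\ FirstC e w) \/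
  (exists e, 0 <= e <= n /\ w mod m = pos ft e + ft /\ SecondC e w) \/
  (forall e, 0 <= e <= n -> w mod m <> pos ft e /\ w mod m <> pos ft e + ft).
Definition Cset x := (0 <= x /\ (m | x)) \/ In x B \/ In x F.

Lemma SB_nonneg : 0 <= SB B.
Proof. unfold SB. clear. induction B; simpl; lia. Qed.

Lemma Dnn : fmin <= fmax.
Proof. apply Hfmin'; auto. Qed.

Lemma G_ge : 2*(fmax - fmin) + 2*SB B + 1 <= G.
Proof. unfold G. pose proof SB_nonneg. pose proof Dnn. nia. Qed.

Lemma n_pos : 1 <= n.
Proof. destruct B; [congruence|]. simpl length. lia. Qed.

Lemma pos0 : pos ft 0 = 0.
Proof. unfold pos. rewrite Z.div_0_l, Z.mod_0_l by lia. lia. Qed.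

Lemma posb e : 0 <= e <= n -> 0 <= pos ft e /\ pos ft e + ft < m.
Proof. intros. apply (pos_bounds m ft n); lia. Qed.

Lemma T_le r g : In g F -> T r g <= r + ft - G.
Proof. intros Hg. unfold T. pose proof (Hfmin' g Hg). pose proof G_ge. pose proof SB_nonneg. pose proof Dnn.
  assert (G*1 <= G*(g - fmin + 1)) by (apply Z.mul_le_mono_nonneg_l; lia). lia. Qed.

Lemma T_lt r g g' : In g F -> g < g' -> T r g' + G <= T r g.
Proof. intros Hg Hlt. unfold T. pose proof G_ge. pose proof SB_nonneg. pose proof Dnn.
  assert (G*(g+1) <= G*g') by (apply Z.mul_le_mono_nonneg_l; lia). nia. Qed.

Lemma T_ge r g : In g F -> r + ft - G*(fmax - fmin + 1) <= T r g.
Proof. intros Hg. unfold T. pose proof (Hfmax' g Hg). pose proof G_ge. pose proof SB_nonneg. pose proof Dnn.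
  assert (G*(g - fmin + 1) <= G*(fmax - fmin+1)) by (apply Z.mul_le_mono_nonneg_l; lia). lia. Qed.

Lemma bb_in e : 1 <= e <= n -> In (bb e) B.
Proof. intros He. unfold bb. apply nth_In. lia. Qed.

Lemma bb_mod e : 1 <= e <= n -> bb e mod m = 0.
Proof. intros He. apply Z.mod_divide; [lia|]. apply HBd, bb_in; auto. Qed.

Lemma W_first e w : Wset w -> 0 <= e <= n -> w mod m = pos ft e -> FirstC e w.
Proof.
  intros [(e' & He' & Hw & Hc)|[(e' & He' & Hw & Hc)|Hn]] He Hw0.
  - assert (e = e') by (apply (pos_inj ft); lia). subst; auto.
  - exfalso. apply (pos_neq ft e e'); lia.
  - exfalso. destruct (Hn e He) as [Hn1 Hn2]. auto.
Qed.

Lemma W_second e w : Wset w -> 0 <= e <= n -> w mod m = pos ft e + ft -> SecondC e w.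
Proof.
  intros [(e' & He' & Hw & Hc)|[(e' & He' & Hw & Hc)|Hn]] He Hw0.
  - exfalso. apply (pos_neq ft e' e); lia.
  - assert (e = e') by (apply (pos_inj ft); lia). subst; auto.
  - exfalso. destruct (Hn e He) as [Hn1 Hn2]. auto.
Qed.

Lemma C_cases c : Cset c -> (c mod m = 0 /\ ((0 <= c /\ (m | c)) \/ In c B)) \/ (In c F /\ c mod m = ft).
Proof.
  intros [[Hc1 Hc2]|[H|H]].
  - left. split; [apply Z.mod_divide; auto; lia|left; auto].
  - left. split; [apply Z.mod_divide; [lia|]; auto|right; auto].
  - right. auto.
Qed.

Lemma ft_mod : ft mod m = ft.
Proof. apply Z.mod_small; lia. Qed.

Lemma notFC r w : ~ FC r w -> (exists f, In f F /\ w + f = r + ft) \/ Hole r w.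
Proof.
  intros H. unfold FC in H. destruct (classic (Hole r w)) as [Hh|Hh]; [right; auto|left].
  apply NNPP. intros Hn. apply H. split; auto. intros f Hf E. apply Hn. eauto.
Qed.

Lemma FC_target r g : In g F -> FC r (T r g - g).
Proof.
  intros Hg. pose proof (T_le r g Hg) as X1. pose proof G_ge as X2. pose proof SB_nonneg as X3.
  pose proof (Hfmin' g Hg) as X4. pose proof (Hfmax' g Hg) as X5. split.
  - intros f Hf E. pose proof (Hfmin' f Hf). pose proof (Hfmax' f Hf). lia.
  - intros (g' & Hg' & H1 & H2).
    pose proof (Hfmin' g' Hg'). pose proof (Hfmax' g' Hg').
    destruct (Z.lt_trichotomy g g') as [L|[L|L]].
    + pose proof (T_lt r g g' Hg L). lia.
    + subst. lia.
    + pose proof (T_lt r g' g Hg' L). lia.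
Qed.

Lemma cover_second e z : 1 <= e <= n -> z mod m = pos ft e + ft ->
  exists c w, Cset c /\ Wset w /\ z = c + w.
Proof.
  intros He Hz. pose proof (posb e ltac:(lia)) as [Hr1 Hr2].
  set (r := pos ft e) in *.
  assert (Hfin : forall f, In f F -> FC r (z - f) -> exists c w, Cset c /\ Wset w /\ z = c + w).
  { intros f Hf HF. exists f, (z - f). split; [right; right; auto|]. split; [|lia].
    left. exists e. split; [lia|]. split.
    - rewrite (mod_sub m z f (r + ft) ft) by (auto; lia). lia.
    - unfold FirstC. destruct (Z.eq_dec e 0); [lia|]. auto. }
  destruct (Z.eq_dec z (r + ft)) as [Ez|Ez].
  { exists (bb e), (r + ft - bb e). split; [right; left; apply bb_in; auto|]. split; [|lia].
    right; left. exists e. split; [lia|]. split.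
    - rewrite (mod_sub m (r + ft) (bb e) (r+ft) 0); try lia. apply Z.mod_small; lia. apply bb_mod; lia.
    - unfold SecondC. destruct (Z.eq_dec e 0); [lia|]. reflexivity. }
  destruct (classic (exists g, In g F /\ z = T r g)) as [(g & Hg & Eg)|Hng].
  { apply (Hfin g Hg). rewrite Eg. apply FC_target; auto. }
  destruct (classic (FC r (z - fmax))) as [H1|H1]; [apply (Hfin fmax); auto|].
  destruct (classic (FC r (z - fmin))) as [H2|H2]; [apply (Hfin fmin); auto|].
  exfalso. pose proof G_ge. pose proof SB_nonneg. pose proof Dnn.
  apply notFC in H1. apply notFC in H2.
  destruct H1 as [(f1 & Hf1 & E1)|(g1 & Hg1 & A1 & _)];
  destruct H2 as [(f2 & Hf2 & E2)|(g2 & Hg2 & A2 & _)].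
  - pose proof (Hfmax' f1 Hf1) as X1. pose proof (Hfmin' f2 Hf2) as X2. lia.
  - pose proof (Hfmax' f1 Hf1). pose proof (T_le r g2 Hg2). lia.
  - pose proof (Hfmax' f2 Hf2). pose proof (Hfmin' f2 Hf2). pose proof (T_le r g1 Hg1). lia.
  - destruct (Z.lt_trichotomy g1 g2) as [L|[L|L]].
    + pose proof (T_lt r g1 g2 Hg1 L). lia.
    + subst. apply Hng. exists g2. split; auto. lia.
    + pose proof (T_lt r g2 g1 Hg2 L). lia.
Qed.

Lemma cover_first e z : 0 <= e <= n -> z mod m = pos ft e ->
  exists c w, Cset c /\ Wset w /\ z = c + w.
Proof.
  intros He Hz. pose proof (posb e He) as [Hr1 Hr2].
  set (K0 := G*(fmax - fmin + 1)).
  assert (HK0 : 0 <= K0) by (unfold K0; pose proof G_ge; pose proof SB_nonneg; pose proof Dnn; nia).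
  set (p := Z.abs z + Z.abs fmax + K0 + 1).
  assert (Hmp : 2*p <= m*p) by (unfold p; nia).
  exists (m*p), (z - m*p). split.
  { left. split; [unfold p; nia|]. apply Z.divide_factor_l. }
  split; [|lia].
  assert (Hw : z - m*p + fmax < - K0) by (unfold p in *; lia).
  left. exists e. split; [auto|]. split; [rewrite mod_mul_sub; auto|].
  unfold FirstC. destruct (Z.eq_dec e 0).
  - intros f Hf. pose proof (Hfmax' f Hf). lia.
  - split.
    + intros f Hf. pose proof (Hfmax' f Hf). lia.
    + intros (g & Hg & A & _). pose proof (T_ge (pos ft e) g Hg). fold K0 in H. lia.
Qed.

Lemma cover_second0 z : z mod m = ft -> exists c w, Cset c /\ Wset w /\ z = c + w.
Proof.
  intros Hz. pose proof pos0.
  destruct (Z_le_gt_dec ft z).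
  - exists (z - ft), ft. split; [|split; [|lia]].
    + left. split; [lia|]. apply Z.mod_divide; [lia|].
      rewrite (mod_sub m z ft ft ft); auto; try lia. apply ft_mod.
    + right; left. exists 0. split; [lia|]. split; [rewrite ft_mod; lia|].
      unfold SecondC. destruct (Z.eq_dec 0 0); [auto|lia].
  - exists fmax, (z - fmax). split; [right; right; auto|]. split; [|lia].
    left. exists 0. split; [lia|]. split.
    + rewrite (mod_sub m z fmax ft ft); auto; lia.
    + unfold FirstC. destruct (Z.eq_dec 0 0); [|lia]. intros f Hf. pose proof (Hfmax' f Hf). lia.
Qed.

Lemma cover_all : forall z, exists c w, Cset c /\ Wset w /\ z = c + w.
Proof.
  intros z.
  destruct (classic (exists e, 0 <= e <= n /\ z mod m = pos ft e)) as [(e & He & Hz)|N1].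
  { apply (cover_first e); auto. }
  destruct (classic (exists e, 0 <= e <= n /\ z mod m = pos ft e + ft)) as [(e & He & Hz)|N2].
  { destruct (Z.eq_dec e 0) as [->|Ne].
    - apply cover_second0. rewrite pos0 in Hz. lia.
    - apply (cover_second e); auto; lia. }
  exists 0, z. split; [left; split; [lia|apply Z.divide_0_r]|]. split; [|lia].
  right; right. intros e He. split; intros E; [apply N1|apply N2]; eauto.
Qed.

Lemma wit_mN x : 0 <= x -> (m | x) -> forall c w, Cset c -> Wset w -> x + ft = c + w -> c = x.
Proof.
  intros H0 Hd c w Hc Hw E. pose proof pos0.
  assert (Hx : x mod m = 0) by (apply Z.mod_divide; auto; lia).
  assert (Hxf : (x + ft) mod m = ft) by (rewrite (mod_add m x ft 0 ft); auto; try lia; apply ft_mod).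
  replace w with (x + ft - c) in Hw by lia.
  destruct (C_cases c Hc) as [(Hc0 & _)|(HcF & Hcm)].
  - pose proof (W_second 0 _ Hw ltac:(pose proof n_pos; lia)) as HS.
    rewrite (mod_sub m _ c ft 0) in HS by (auto; lia). specialize (HS ltac:(lia)).
    unfold SecondC in HS. destruct (Z.eq_dec 0 0); lia.
  - pose proof (W_first 0 _ Hw ltac:(pose proof n_pos; lia)) as HS.
    rewrite (mod_sub m _ c ft ft) in HS by (auto; lia). specialize (HS ltac:(lia)).
    unfold FirstC in HS. destruct (Z.eq_dec 0 0); [|lia]. specialize (HS c HcF). lia.
Qed.

Lemma wit_B e : 1 <= e <= n -> forall c w, Cset c -> Wset w -> pos ft e + ft = c + w -> c = bb e.
Proof.
  intros He c w Hc Hw E. pose proof (posb e ltac:(lia)) as [Hr1 Hr2].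
  assert (Hz : (pos ft e + ft) mod m = pos ft e + ft) by (apply Z.mod_small; lia).
  replace w with (pos ft e + ft - c) in Hw by lia.
  destruct (C_cases c Hc) as [(Hc0 & _)|(HcF & Hcm)].
  - pose proof (W_second e _ Hw ltac:(lia)) as HS.
    rewrite (mod_sub m _ c (pos ft e + ft) 0) in HS by (auto; lia). specialize (HS ltac:(lia)).
    unfold SecondC in HS. destruct (Z.eq_dec e 0); lia.
  - pose proof (W_first e _ Hw ltac:(lia)) as HS.
    rewrite (mod_sub m _ c (pos ft e + ft) ft) in HS by (auto; lia). specialize (HS ltac:(lia)).
    unfold FirstC in HS. destruct (Z.eq_dec e 0); [lia|]. destruct HS as [HS _].
    specialize (HS c HcF). lia.
Qed.

Lemma wit_F f : In f F -> forall c w, Cset c -> Wset w -> T (pos ft 1) f = c + w -> c = f.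
Proof.
  intros Hf c w Hc Hw E. pose proof n_pos. pose proof (posb 1 ltac:(lia)) as [Hr1 Hr2].
  set (r := pos ft 1) in *.
  assert (Hz : (T r f) mod m = r + ft).
  { unfold T, G. replace (r + ft - m * (2 * (fmax - fmin) + 2 * SB B + 1) * (f - fmin + 1))
      with (r + ft - m * ((2 * (fmax - fmin) + 2 * SB B + 1) * (f - fmin + 1))) by ring.
    rewrite mod_mul_sub. apply Z.mod_small; lia. }
  replace w with (T r f - c) in Hw by lia.
  destruct (C_cases c Hc) as [(Hc0 & Hc1)|(HcF & Hcm)].
  - pose proof (W_second 1 _ Hw ltac:(lia)) as HS.
    rewrite (mod_sub m _ c (r + ft) 0) in HS by (auto; lia). specialize (HS ltac:(lia)).
    unfold SecondC in HS. destruct (Z.eq_dec 1 0); [lia|]. fold r in HS.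
    pose proof (bb_in 1 ltac:(lia)) as Hb1. pose proof (SB_ge B _ Hb1).
    pose proof (T_le r f Hf). pose proof G_ge. pose proof SB_nonneg. pose proof Dnn.
    destruct Hc1 as [[Hc1 _]|Hc1].
    + lia.
    + pose proof (SB_ge B _ Hc1). lia.
  - pose proof (W_first 1 _ Hw ltac:(lia)) as HS.
    rewrite (mod_sub m _ c (r + ft) ft) in HS by (auto; lia). specialize (HS ltac:(lia)).
    unfold FirstC in HS. destruct (Z.eq_dec 1 0); [lia|]. destruct HS as [_ HS].
    destruct (Z.eq_dec c f) as [|Ne]; auto. exfalso. apply HS.
    exists f. split; auto. pose proof (Hfmin' c HcF). pose proof (Hfmax' c HcF). fold r. lia.
Qed.

Lemma wit_all x : Cset x -> exists z, forall c w, Cset c -> Wset w -> z = c + w -> c = x.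
Proof.
  intros [[H1 H2]|[H|H]].
  - exists (x + ft). apply wit_mN; auto.
  - destruct (In_nth B x 0 H) as (i & Hi & Ei).
    exists (pos ft (Z.of_nat i + 1) + ft). intros c w Hc Hw E.
    rewrite <- Ei. replace (nth i B 0) with (bb (Z.of_nat i + 1)).
    + refine (wit_B (Z.of_nat i + 1) _ c w Hc Hw E). lia.
    + unfold bb. f_equal. lia.
  - exists (T (pos ft 1) x). apply wit_F; auto.
Qed.

Lemma main_MAC : is_MAC Cset Wset.
Proof.
  split.
  - intros z. destruct (cover_all z) as (c & w & Hc & Hw & E). exists c, w; auto.
  - intros C' Hsub (x & Hx & Hnx) Hcov.
    destruct (wit_all x Hx) as (z & Hz).
    destruct (Hcov z) as (c & w & Hc & Hw & E).
    assert (c = x) by (apply (Hz c w); auto). subst. auto.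
Qed.

End Main.

Theorem proposition5 (m ft : Z) (B F : list Z) :
  2 <= m ->
  B <> nil -> NoDup B -> (forall b, In b B -> (m | b)) ->
  F <> nil -> (forall f, In f F -> f mod m = ft) ->
  1 <= ft <= m - 1 ->
  ft + 2 * ft * ((Z.of_nat (length B) + 1) / ft)
     + (Z.of_nat (length B) + 1) mod ft <= m ->
  arises_as_MAC
    (fun x => (0 <= x /\ (m | x)) \/ In x B \/ In x F).
Proof.
  intros Hm HB _ HBd HF HFm Hft Hb.
  destruct (list_min F HF) as (fmin & Hmin & Hmin').
  destruct (list_max F HF) as (fmax & Hmax & Hmax').
  exists (Wset m ft B F fmin fmax).
  exact (main_MAC m ft B F fmin fmax Hm Hft HBd HB HFm Hmin Hmin' Hmax Hmax' Hb).
Qed.
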